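(* Let $A$ be a commutative semiring (not necessarily idempotent). Every finitely presented flat $A$-module is projective.
   Context: Modules over $A$ are commutative monoids with compatible $A$-action; $\otimes_A$ is the tensor product. $M$ is flat if $-\otimes_A M$ is exact (preserves finite limits and finite colimits). $M$ is finitely presented if it is a coequaliser of two homomorphisms between finite free modules $A^k\rightrightarrows A^n$. $M$ is projective if every surjection onto $M$ has a section (equivalently $M$ is a retract of a free module). *)

(* Defs.v *)
(* Modules over a commutative semiring A are MathComp
   left semimodules (lSemiModType A); homomorphisms are functions satisfying
   [is_hom]; the tensor product and the categorical (co)limits in the
   category of A-modules are given by their universal properties. *)
From HB Require Import structures.
From mathcomp Require Import all_boot all_order all_algebra.
Set Implicit Arguments. Unset Strict Implicit. Unset Printing Implicit Defensive.
Import GRing.Theory.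
Local Open Scope ring_scope.

Section ModCat.
Variable A : comPzSemiRingType.

Definition is_hom (U V : lSemiModType A) (f : U -> V) : Prop :=
  [/\ f 0 = 0, (forall x y, f (x + y) = f x + f y)
    & (forall (a : A) x, f (a *: x) = a *: f x)].

Definition is_terminal (T : lSemiModType A) : Prop :=
  forall Z : lSemiModType A,
    exists u : Z -> T, is_hom u /\ forall v : Z -> T, is_hom v -> v =1 u.

Definition is_product (P X Y : lSemiModType A) (p1 : P -> X) (p2 : P -> Y) : Prop :=
  is_hom p1 /\ is_hom p2 /\
  forall (Z : lSemiModType A) (z1 : Z -> X) (z2 : Z -> Y), is_hom z1 -> is_hom z2 ->
    exists u : Z -> P, [/\ is_hom u, p1 \o u =1 z1, p2 \o u =1 z2 &
      forall v : Z -> P, is_hom v -> p1 \o v =1 z1 -> p2 \o v =1 z2 -> v =1 u].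

Definition is_equalizer (E X Y : lSemiModType A) (f g : X -> Y) (e : E -> X) : Prop :=
  is_hom e /\ f \o e =1 g \o e /\
  forall (Z : lSemiModType A) (z : Z -> X), is_hom z -> f \o z =1 g \o z ->
    exists u : Z -> E, [/\ is_hom u, e \o u =1 z &
      forall v : Z -> E, is_hom v -> e \o v =1 z -> v =1 u].

Definition is_initial (I : lSemiModType A) : Prop :=
  forall Z : lSemiModType A,
    exists u : I -> Z, is_hom u /\ forall v : I -> Z, is_hom v -> v =1 u.

Definition is_coproduct (C X Y : lSemiModType A) (i1 : X -> C) (i2 : Y -> C) : Prop :=
  is_hom i1 /\ is_hom i2 /\
  forall (Z : lSemiModType A) (z1 : X -> Z) (z2 : Y -> Z), is_hom z1 -> is_hom z2 ->
    exists u : C -> Z, [/\ is_hom u, u \o i1 =1 z1, u \o i2 =1 z2 &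
      forall v : C -> Z, is_hom v -> v \o i1 =1 z1 -> v \o i2 =1 z2 -> v =1 u].

Definition is_coequalizer (Q X Y : lSemiModType A) (f g : X -> Y) (q : Y -> Q) : Prop :=
  is_hom q /\ q \o f =1 q \o g /\
  forall (Z : lSemiModType A) (z : Y -> Z), is_hom z -> z \o f =1 z \o g ->
    exists u : Q -> Z, [/\ is_hom u, u \o q =1 z &
      forall v : Q -> Z, is_hom v -> v \o q =1 z -> v =1 u].

Definition is_bilinear (N M P : lSemiModType A) (b : N -> M -> P) : Prop :=
  (forall m, is_hom (fun n => b n m)) /\ (forall n, is_hom (b n)).

Definition is_tensor (N M T : lSemiModType A) (b : N -> M -> T) : Prop :=
  is_bilinear b /\
  forall (P : lSemiModType A) (phi : N -> M -> P), is_bilinear phi ->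
    exists h : T -> P, [/\ is_hom h, (forall n m, h (b n m) = phi n m) &
      forall h' : T -> P, is_hom h' -> (forall n m, h' (b n m) = phi n m) -> h' =1 h].

Definition tensor_map (N1 N2 M T1 T2 : lSemiModType A)
  (b1 : N1 -> M -> T1) (b2 : N2 -> M -> T2) (f : N1 -> N2) (h : T1 -> T2) : Prop :=
  is_hom h /\ forall n m, h (b1 n m) = b2 (f n) m.

Definition tensor_preserves_finite_limits (M : lSemiModType A) : Prop :=
  [/\ (forall (T TT : lSemiModType A) (b : T -> M -> TT),
         is_terminal T -> is_tensor b -> is_terminal TT),
      (forall (P X Y TP TX TY : lSemiModType A) (p1 : P -> X) (p2 : P -> Y)
         (bP : P -> M -> TP) (bX : X -> M -> TX) (bY : Y -> M -> TY)
         (q1 : TP -> TX) (q2 : TP -> TY),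
         is_product p1 p2 -> is_tensor bP -> is_tensor bX -> is_tensor bY ->
         tensor_map bP bX p1 q1 -> tensor_map bP bY p2 q2 -> is_product q1 q2) &
      (forall (E X Y TE TX TY : lSemiModType A) (f g : X -> Y) (e : E -> X)
         (bE : E -> M -> TE) (bX : X -> M -> TX) (bY : Y -> M -> TY)
         (fT gT : TX -> TY) (eT : TE -> TX),
         is_equalizer f g e -> is_tensor bE -> is_tensor bX -> is_tensor bY ->
         tensor_map bX bY f fT -> tensor_map bX bY g gT -> tensor_map bE bX e eT ->
         is_equalizer fT gT eT)].

Definition tensor_preserves_finite_colimits (M : lSemiModType A) : Prop :=
  [/\ (forall (I TI : lSemiModType A) (b : I -> M -> TI),
         is_initial I -> is_tensor b -> is_initial TI),
      (forall (C X Y TC TX TY : lSemiModType A) (i1 : X -> C) (i2 : Y -> C)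
         (bC : C -> M -> TC) (bX : X -> M -> TX) (bY : Y -> M -> TY)
         (j1 : TX -> TC) (j2 : TY -> TC),
         is_coproduct i1 i2 -> is_tensor bC -> is_tensor bX -> is_tensor bY ->
         tensor_map bX bC i1 j1 -> tensor_map bY bC i2 j2 -> is_coproduct j1 j2) &
      (forall (Q X Y TQ TX TY : lSemiModType A) (f g : X -> Y) (q : Y -> Q)
         (bQ : Q -> M -> TQ) (bX : X -> M -> TX) (bY : Y -> M -> TY)
         (fT gT : TX -> TY) (qT : TY -> TQ),
         is_coequalizer f g q -> is_tensor bQ -> is_tensor bX -> is_tensor bY ->
         tensor_map bX bY f fT -> tensor_map bX bY g gT -> tensor_map bY bQ q qT ->
         is_coequalizer fT gT qT)].

Definition flat (M : lSemiModType A) : Prop :=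
  tensor_preserves_finite_limits M /\ tensor_preserves_finite_colimits M.

Definition finitely_presented (M : lSemiModType A) : Prop :=
  exists (k n : nat) (f g : 'rV[A]_k -> 'rV[A]_n) (q : 'rV[A]_n -> M),
    [/\ is_hom f, is_hom g & is_coequalizer f g q].

Definition projective (M : lSemiModType A) : Prop :=
  forall (N : lSemiModType A) (p : N -> M), is_hom p -> (forall m : M, exists n : N, p n = m) ->
    exists s : M -> N, is_hom s /\ p \o s =1 id.

End ModCat.

(* Main.v *)
From HB Require Import structures.
From mathcomp Require Import all_boot all_order all_algebra.
From mathcomp Require Import boolp.
Require Import Defs.
From Stdlib Require Import ClassicalEpsilon ProofIrrelevance.
Set Implicit Arguments. Unset Strict Implicit. Unset Printing Implicit Defensive.
Import GRing.Theory.
Local Open Scope ring_scope.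

Section Tensor.
Variables (A : comPzSemiRingType) (N M : lSemiModType A).

Definition TF := seq (N * M).
Definition sc (a : A) (s : TF) : TF := map (fun p => (a *: p.1, p.2)) s.

Inductive TR : TF -> TF -> Prop :=
| Rrefl s : TR s s
| Rsym s t : TR s t -> TR t s
| Rtrans s t u : TR s t -> TR t u -> TR s u
| Rcat s s' t t' : TR s s' -> TR t t' -> TR (s ++ t) (s' ++ t')
| Rsc a s t : TR s t -> TR (sc a s) (sc a t)
| Rcomm s t : TR (s ++ t) (t ++ s)
| Raddl n n' m : TR [:: (n + n', m)] [:: (n, m); (n', m)]
| Raddr n m m' : TR [:: (n, m + m')] [:: (n, m); (n, m')]
| Rzl m : TR [:: (0, m)] [::]
| Rzr n : TR [:: (n, 0)] [::]
| Rscal a n m : TR [:: (a *: n, m)] [:: (n, a *: m)].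

Definition Tens := {P : TF -> Prop | exists s, P = TR s}.
HB.instance Definition _ := gen_eqMixin Tens.
HB.instance Definition _ := gen_choiceMixin Tens.
Definition cls (s : TF) : Tens := exist _ (TR s) (ex_intro _ s erefl).
Definition rep (x : Tens) : TF :=
  proj1_sig (constructive_indefinite_description _ (proj2_sig x)).

Lemma repK x : cls (rep x) = x.
Proof.
rewrite /rep; case: constructive_indefinite_description => s /= e.
case: x e => P hP /= e; subst P; congr exist; apply: proof_irrelevance.
Qed.

Lemma cls_eq s t : cls s = cls t <-> TR s t.
Proof.
split.
  move=> /(f_equal (@proj1_sig _ _)) /= e; rewrite e; exact: Rrefl.
move=> st; have e : TR s = TR t.
  apply: functional_extensionality_dep => u; apply: propositional_extensionality.
  split=> h; [exact: Rtrans (Rsym st) h | exact: Rtrans st h].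
rewrite /cls; move: (ex_intro _ s _) (ex_intro _ t _); rewrite e => p1 p2.
congr exist; apply: proof_irrelevance.
Qed.

Lemma Rrep s : TR (rep (cls s)) s.
Proof. by apply/cls_eq; rewrite repK. Qed.

Definition tadd x y := cls (rep x ++ rep y).
Definition tzero := cls [::].
Definition tscale a x := cls (sc a (rep x)).

Lemma taddE s t : tadd (cls s) (cls t) = cls (s ++ t).
Proof. by apply/cls_eq; apply: Rcat; apply: Rrep. Qed.
Lemma tscaleE a s : tscale a (cls s) = cls (sc a s).
Proof. by apply/cls_eq; apply: Rsc; apply: Rrep. Qed.

Lemma taddA : associative tadd.
Proof.
move=> x y z; rewrite -(repK x) -(repK y) -(repK z) !taddE; by rewrite catA.
Qed.
Lemma taddC : commutative tadd.
Proof. move=> x y; rewrite -(repK x) -(repK y) !taddE; apply/cls_eq; exact: Rcomm. Qed.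
Lemma tadd0 : left_id tzero tadd.
Proof. move=> x; rewrite -(repK x) /tzero taddE //. Qed.

HB.instance Definition _ := GRing.isNmodule.Build Tens taddA taddC tadd0.

Lemma Rswap x y s u : TR ((x ++ y) ++ (s ++ u)) ((x ++ s) ++ (y ++ u)).
Proof.
rewrite -!catA; apply: Rcat; first exact: Rrefl.
rewrite !catA; apply: Rcat; [exact: Rcomm | exact: Rrefl].
Qed.

Lemma tscaleA a b v : tscale a (tscale b v) = tscale (a * b) v.
Proof.
rewrite -(repK v) !tscaleE; congr cls; rewrite /sc -map_comp; apply: eq_map => p /=.
by rewrite scalerA.
Qed.
Lemma tscale0 v : tscale 0 v = 0.
Proof.
rewrite -(repK v) tscaleE; apply/cls_eq; elim: (rep v) => [|p s IH] /=.
  exact: Rrefl.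
rewrite scale0r; apply: (@Rcat [:: (0, p.2)] [::] _ [::]); [exact: Rzl | exact: IH].
Qed.
Lemma tscale1 : left_id 1 tscale.
Proof.
move=> v; rewrite -(repK v) tscaleE; congr cls; rewrite /sc; elim: (rep v) => [|[n m] s IH] //=.
by rewrite scale1r IH.
Qed.
Lemma tscaleDr : right_distributive tscale +%R.
Proof.
move=> a x y; rewrite -(repK x) -(repK y); change (tscale a (tadd (cls (rep x)) (cls (rep y))) = tadd (tscale a (cls (rep x))) (tscale a (cls (rep y)))).
by rewrite taddE !tscaleE taddE /sc map_cat.
Qed.
Lemma tscaleDl v : {morph tscale^~ v: a b / a + b}.
Proof.
move=> a b; rewrite -(repK v); change (tscale (a + b) (cls (rep v)) = tadd (tscale a (cls (rep v))) (tscale b (cls (rep v)))).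
rewrite !tscaleE taddE; apply/cls_eq; elim: (rep v) => [|p s IH] /=.
  exact: Rrefl.
apply: Rtrans (Rswap [:: (a *: p.1, p.2)] [:: (b *: p.1, p.2)] _ _).
apply: (@Rcat [:: ((a + b) *: p.1, p.2)] _ (sc (a + b) s)) => //.
rewrite scalerDl; exact: Raddl.
Qed.

HB.instance Definition _ := GRing.Nmodule_isLSemiModule.Build A Tens tscaleA tscale0 tscale1 tscaleDr tscaleDl.


Definition tb (n : N) (m : M) : Tens := cls [:: (n, m)].

Lemma tcons p s : cls (p :: s) = tb p.1 p.2 + cls s.
Proof. by case: p => n m; rewrite /tb /= -[RHS]/(tadd _ _) taddE. Qed.

Lemma cls_sum s : cls s = \sum_(p <- s) tb p.1 p.2.
Proof. elim: s => [|p s IH]; first by rewrite big_nil. by rewrite tcons big_cons IH. Qed.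

Lemma Tens_span (x : Tens) : exists s : TF, x = \sum_(p <- s) tb p.1 p.2.
Proof. by exists (rep x); rewrite -cls_sum repK. Qed.

Lemma tb_bilinear : is_bilinear tb.
Proof.
split=> [m|n]; split.
- by apply/cls_eq; apply: Rzl.
- move=> x y; rewrite /tb -[RHS]/(tadd _ _) taddE; apply/cls_eq; exact: Raddl.
- by move=> a x; rewrite /tb -[RHS]/(tscale _ _) tscaleE.
- by apply/cls_eq; apply: Rzr.
- move=> x y; rewrite /tb -[RHS]/(tadd _ _) taddE; apply/cls_eq; exact: Raddr.
- move=> a x; rewrite /tb -[RHS]/(tscale _ _) tscaleE; apply/cls_eq; apply: Rsym; exact: Rscal.
Qed.

Section Ev.
Variables (P : lSemiModType A) (phi : N -> M -> P).
Hypothesis hphi : is_bilinear phi.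
Definition ev (s : TF) : P := \sum_(p <- s) phi p.1 p.2.


Lemma phi0l m : phi 0 m = 0. Proof. by case: hphi => h1 _; case: (h1 m). Qed.
Lemma phi0r n : phi n 0 = 0. Proof. by case: hphi => _ h2; case: (h2 n). Qed.
Lemma phiDl x y m : phi (x + y) m = phi x m + phi y m.
Proof. by case: hphi => h1 _; case: (h1 m). Qed.
Lemma phiDr n x y : phi n (x + y) = phi n x + phi n y.
Proof. by case: hphi => _ h2; case: (h2 n). Qed.
Lemma phiZl a x m : phi (a *: x) m = a *: phi x m.
Proof. by case: hphi => h1 _; case: (h1 m). Qed.
Lemma phiZr a n x : phi n (a *: x) = a *: phi n x.
Proof. by case: hphi => _ h2; case: (h2 n). Qed.

Lemma ev_sc a s : ev (sc a s) = a *: ev s.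
Proof.
rewrite /ev /sc big_map scaler_sumr; by apply: eq_bigr => p _ /=; rewrite phiZl.
Qed.

Lemma ev_R s t : TR s t -> ev s = ev t.
Proof.
elim=> {s t} //.
- by move=> s t u _ -> _ ->.
- by move=> s s' t t' _ e1 _ e2; rewrite /ev !big_cat /= -!/(ev _) e1 e2.
- by move=> a s t _ e; rewrite !ev_sc e.
- by move=> s t; rewrite /ev !big_cat; apply: addrC.
- by move=> n n' m; rewrite /ev !big_cons !big_nil /= phiDl !addr0.
- by move=> n m m'; rewrite /ev !big_cons !big_nil /= phiDr !addr0.
- by move=> m; rewrite /ev !big_cons !big_nil /= phi0l addr0.
- by move=> n; rewrite /ev !big_cons !big_nil /= phi0r addr0.
- by move=> a n m; rewrite /ev !big_cons !big_nil /= phiZl phiZr.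
Qed.

Definition tlift (x : Tens) : P := ev (rep x).
Lemma tlift_cls s : tlift (cls s) = ev s.
Proof. exact/ev_R/Rrep. Qed.
End Ev.

Lemma hom_sum (U V : lSemiModType A) (h : U -> V) I (r : seq I) (F : I -> U) :
  is_hom h -> h (\sum_(i <- r) F i) = \sum_(i <- r) h (F i).
Proof.
case=> h0 hD _; elim: r => [|i r IH]; first by rewrite !big_nil.
by rewrite !big_cons hD IH.
Qed.

Lemma tensor_ok : is_tensor tb.
Proof.
split; first exact: tb_bilinear.
move=> P phi hphi; exists (tlift phi); split.
- split; first by change (tlift phi (cls [::]) = 0); rewrite tlift_cls // /ev big_nil.
  + move=> x y; rewrite -(repK x) -(repK y); change (tlift phi (tadd (cls (rep x)) (cls (rep y))) = tlift phi (cls (rep x)) + tlift phi (cls (rep y))); rewrite taddE !tlift_cls //.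
    by rewrite /ev big_cat.
  + move=> a x; rewrite -(repK x); change (tlift phi (tscale a (cls (rep x))) = a *: tlift phi (cls (rep x))); rewrite tscaleE !tlift_cls //.
    exact: ev_sc.
- by move=> n m; rewrite tlift_cls // /ev big_seq1.
- move=> h' hh' e x; rewrite -(repK x) tlift_cls // cls_sum hom_sum //.
  by apply: eq_bigr => p _; rewrite e.
Qed.

End Tensor.
Section Helpers.
Variable A : comPzSemiRingType.

Lemma hom0 (U V : lSemiModType A) (h : U -> V) : is_hom h -> h 0 = 0.
Proof. by case. Qed.
Lemma homD (U V : lSemiModType A) (h : U -> V) x y : is_hom h -> h (x + y) = h x + h y.
Proof. by case. Qed.
Lemma homZ (U V : lSemiModType A) (h : U -> V) a x : is_hom h -> h (a *: x) = a *: h x.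
Proof. by case. Qed.

Lemma hom_row n (V : lSemiModType A) (h : 'rV[A]_n -> V) v :
  is_hom h -> h v = \sum_(i < n) v 0 i *: h 'e_i.
Proof.
move=> hh; rewrite {1}(row_sum_delta v) hom_sum //.
by apply: eq_bigr => i _; rewrite homZ.
Qed.

Lemma hom_ext n (V : lSemiModType A) (h h' : 'rV[A]_n -> V) :
  is_hom h -> is_hom h' -> (forall i, h 'e_i = h' 'e_i) -> h =1 h'.
Proof.
move=> hh hh' e v; rewrite (hom_row v hh) (hom_row v hh').
by apply: eq_bigr => i _; rewrite e.
Qed.

Definition dot n (u v : 'rV[A]_n) := \sum_(i < n) u 0 i * v 0 i.

Lemma dote n (u : 'rV[A]_n) i : dot u 'e_i = u 0 i.
Proof.
rewrite /dot (bigD1 i) //= mxE !eqxx mulr1 big1 ?addr0 // => j /negPf nji.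
by rewrite mxE nji andbF mulr0.
Qed.
Lemma edot n (u : 'rV[A]_n) i : dot 'e_i u = u 0 i.
Proof.
rewrite /dot (bigD1 i) //= mxE !eqxx mul1r big1 ?addr0 // => j /negPf nji.
by rewrite mxE nji andbF mul0r.
Qed.
Lemma dot0l n (v : 'rV[A]_n) : dot 0 v = 0.
Proof. by rewrite /dot big1 // => i _; rewrite mxE mul0r. Qed.
Lemma dot0r n (v : 'rV[A]_n) : dot v 0 = 0.
Proof. by rewrite /dot big1 // => i _; rewrite mxE mulr0. Qed.
Lemma dotDl n (u u' v : 'rV[A]_n) : dot (u + u') v = dot u v + dot u' v.
Proof. by rewrite /dot -big_split; apply: eq_bigr => i _; rewrite mxE mulrDl. Qed.
Lemma dotDr n (u v v' : 'rV[A]_n) : dot u (v + v') = dot u v + dot u v'.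
Proof. by rewrite /dot -big_split; apply: eq_bigr => i _; rewrite mxE mulrDr. Qed.
Lemma dotZl n a (u v : 'rV[A]_n) : dot (a *: u) v = a * dot u v.
Proof. by rewrite /dot mulr_sumr; apply: eq_bigr => i _; rewrite mxE mulrA. Qed.
Lemma dotZr n a (u v : 'rV[A]_n) : dot u (a *: v) = a * dot u v.
Proof. by rewrite /dot mulr_sumr; apply: eq_bigr => i _; rewrite mxE mulrCA. Qed.

Lemma dot_sumr n (u : 'rV[A]_n) I (r : seq I) (F : I -> 'rV[A]_n) :
  dot u (\sum_(i <- r) F i) = \sum_(i <- r) dot u (F i).
Proof.
elim: r => [|i r IH]; first by rewrite !big_nil dot0r.
by rewrite !big_cons dotDr IH.
Qed.

Lemma rowhom n m (c : 'I_m -> 'rV[A]_n) : is_hom (fun v => \row_l dot (c l) v).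
Proof.
split.
- by apply/rowP => l; rewrite !mxE dot0r.
- by move=> x y; apply/rowP => l; rewrite !mxE dotDr.
- by move=> a x; apply/rowP => l; rewrite !mxE dotZr.
Qed.

Lemma combhom m (V : lSemiModType A) (c : 'I_m -> V) :
  is_hom (fun w : 'rV[A]_m => \sum_(l < m) w 0 l *: c l).
Proof.
split.
- by rewrite big1 // => l _; rewrite mxE scale0r.
- by move=> x y; rewrite -big_split; apply: eq_bigr => l _; rewrite mxE scalerDl.
- by move=> a x; rewrite scaler_sumr; apply: eq_bigr => l _; rewrite mxE scalerA.
Qed.

Lemma hom_comp (U V W : lSemiModType A) (h1 : U -> V) (h2 : V -> W) :
  is_hom h1 -> is_hom h2 -> is_hom (fun x => h2 (h1 x)).
Proof.
move=> a b; split.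
- by rewrite (hom0 a) (hom0 b).
- by move=> x y; rewrite (homD _ _ a) (homD _ _ b).
- by move=> c x; rewrite (homZ _ _ a) (homZ _ _ b).
Qed.

Lemma sum_delta n (V : lSemiModType A) (c : 'I_n -> V) i :
  \sum_(i' < n) ('e_i' : 'rV[A]_n) 0 i *: c i' = c i.
Proof.
rewrite (bigD1 i) //= mxE !eqxx scale1r big1 ?addr0 // => j /negPf nji.
by rewrite mxE eq_sym nji andbF scale0r.
Qed.

End Helpers.

Section Esub.
Variables (A : comPzSemiRingType) (k n : nat) (f g : 'rV[A]_k -> 'rV[A]_n).
Definition Epred (u : 'rV[A]_n) := [forall j : 'I_k, dot u (f 'e_j) == dot u (g 'e_j)].
Record Esub := ESub { eval : 'rV[A]_n; eP : Epred eval }.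
HB.instance Definition _ := gen_eqMixin Esub.
HB.instance Definition _ := gen_choiceMixin Esub.

Lemma Eeq (x y : Esub) : eval x = eval y -> x = y.
Proof. case: x y => [x hx] [y hy] /= e; subst y; congr ESub; apply: bool_irrelevance. Qed.

Lemma Epred0 : Epred 0.
Proof. by apply/forallP => j; rewrite !dot0l. Qed.
Lemma EpredD u v : Epred u -> Epred v -> Epred (u + v).
Proof.
move=> /forallP hu /forallP hv; apply/forallP => j.
by rewrite !dotDl (eqP (hu j)) (eqP (hv j)).
Qed.
Lemma EpredZ a u : Epred u -> Epred (a *: u).
Proof. by move=> /forallP hu; apply/forallP => j; rewrite !dotZl (eqP (hu j)). Qed.

Definition ezero := ESub Epred0.
Definition eadd x y := ESub (EpredD (eP x) (eP y)).
Definition escale a x := ESub (EpredZ a (eP x)).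

Lemma eaddA : associative eadd.
Proof. by move=> x y z; apply: Eeq; rewrite /= addrA. Qed.
Lemma eaddC : commutative eadd.
Proof. by move=> x y; apply: Eeq; rewrite /= addrC. Qed.
Lemma eadd0 : left_id ezero eadd.
Proof. by move=> x; apply: Eeq; rewrite /= add0r. Qed.
HB.instance Definition _ := GRing.isNmodule.Build Esub eaddA eaddC eadd0.

Lemma escaleA a b v : escale a (escale b v) = escale (a * b) v.
Proof. by apply: Eeq; rewrite /= scalerA. Qed.
Lemma escale0 v : escale 0 v = 0.
Proof. by apply: Eeq; rewrite /= scale0r. Qed.
Lemma escale1 : left_id 1 escale.
Proof. by move=> v; apply: Eeq; rewrite /= scale1r. Qed.
Lemma escaleDr : right_distributive escale +%R.
Proof. by move=> a x y; apply: Eeq; rewrite /= scalerDr. Qed.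
Lemma escaleDl v : {morph escale^~ v: a b / a + b}.
Proof. by move=> a b; apply: Eeq; rewrite /= scalerDl. Qed.
HB.instance Definition _ := GRing.Nmodule_isLSemiModule.Build A Esub escaleA escale0 escale1 escaleDr escaleDl.

Definition phif (u : 'rV[A]_n) : 'rV[A]_k := \row_j dot u (f 'e_j).
Definition phig (u : 'rV[A]_n) : 'rV[A]_k := \row_j dot u (g 'e_j).

Lemma phif_hom : is_hom phif.
Proof.
split.
- by apply/rowP => j; rewrite !mxE dot0l.
- by move=> x y; apply/rowP => j; rewrite !mxE dotDl.
- by move=> a x; apply/rowP => j; rewrite !mxE dotZl.
Qed.
Lemma phig_hom : is_hom phig.
Proof.
split.
- by apply/rowP => j; rewrite !mxE dot0l.
- by move=> x y; apply/rowP => j; rewrite !mxE dotDl.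
- by move=> a x; apply/rowP => j; rewrite !mxE dotZl.
Qed.

Lemma eval_hom : is_hom eval.
Proof. by split. Qed.

Lemma E_equalizer : is_equalizer phif phig eval.
Proof.
split; first exact: eval_hom.
split.
  move=> [u hu]; apply/rowP => j; rewrite /phif /phig /= !mxE; move/forallP: hu => hu; exact/eqP/hu.
move=> Z z hz ez.
have P x : Epred (z x).
  apply/forallP => j; apply/eqP.
  by have := congr1 (fun w : 'rV[A]_k => w 0 j) (ez x); rewrite /= /phif /phig !mxE.
exists (fun x => ESub (P x)); split.
- split.
  + by apply: Eeq; rewrite /= hom0.
  + by move=> x y; apply: Eeq; rewrite /= homD.
  + by move=> a x; apply: Eeq; rewrite /= homZ.
- by [].
- by move=> v hv e x; apply: Eeq; rewrite /= -e.
Qed.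


End Esub.

Section TensHelp.
Variable A : comPzSemiRingType.

Lemma tb_homl (N M : lSemiModType A) (m : M) : is_hom (fun v : N => tb v m).
Proof. by case: (tb_bilinear N M) => h _; exact: h. Qed.
Lemma tb_homr (N M : lSemiModType A) (v : N) : is_hom (@tb _ N M v).
Proof. by case: (tb_bilinear N M) => _ h; exact: h. Qed.

Lemma tb0l (N M : lSemiModType A) (m : M) : tb (0 : N) m = 0.
Proof. by case: (tb_homl N m). Qed.
Lemma tbDl (N M : lSemiModType A) (m : M) (x y : N) : tb (x + y) m = tb x m + tb y m.
Proof. by case: (tb_homl N m). Qed.
Lemma tbZl (N M : lSemiModType A) (m : M) a (x : N) : tb (a *: x) m = a *: tb x m.
Proof. by case: (tb_homl N m). Qed.
Lemma tbZr (N M : lSemiModType A) (m : M) a (x : N) : tb x (a *: m) = a *: tb x m.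
Proof. by case: (tb_homr M x). Qed.

Lemma tb_suml (N M : lSemiModType A) (m : M) I (r : seq I) (F : I -> N) :
  tb (\sum_(i <- r) F i) m = \sum_(i <- r) tb (F i) m.
Proof. exact: (hom_sum _ _ (tb_homl N m)). Qed.
Lemma tb_sumr (N M : lSemiModType A) (x : N) I (r : seq I) (F : I -> M) :
  tb x (\sum_(i <- r) F i) = \sum_(i <- r) tb x (F i).
Proof. exact: (hom_sum _ _ (tb_homr M x)). Qed.

Lemma tmap_ex (N1 N2 M : lSemiModType A) (f : N1 -> N2) :
  is_hom f -> exists h, tensor_map (@tb _ N1 M) (@tb _ N2 M) f h.
Proof.
move=> hf.
have hb : is_bilinear (fun (x : N1) (m : M) => tb (f x) m).
  split=> [m|x]; last exact: tb_homr.
  split=> /=; first by rewrite (hom0 hf) tb0l.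
  + by move=> x y; rewrite (homD _ _ hf) tbDl.
  + by move=> a x; rewrite (homZ _ _ hf) tbZl.
have [h [hh eh _]] := (tensor_ok N1 M).2 _ _ hb.
by exists h.
Qed.
End TensHelp.

Section MainSec.
Variables (A : comPzSemiRingType) (M : lSemiModType A) (k n : nat).
Variables (f g : 'rV[A]_k -> 'rV[A]_n) (q : 'rV[A]_n -> M).
Hypotheses (hf : is_hom f) (hg : is_hom g) (hq : is_coequalizer f g q) (hfl : flat M).

Definition xi (i : 'I_n) := q 'e_i.
Definition X : Tens 'rV[A]_n M := \sum_(i < n) tb 'e_i (xi i).

Lemma qhom : is_hom q. Proof. by case: hq. Qed.

Lemma fmap_X (F0 : 'rV[A]_k -> 'rV[A]_n) (fT : Tens 'rV[A]_n M -> Tens 'rV[A]_k M) :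
  tensor_map (@tb _ _ M) (@tb _ _ M) (phif F0) fT ->
  fT X = \sum_(j < k) tb 'e_j (q (F0 'e_j)).
Proof.
case=> hfT efT.
rewrite /X hom_sum //.
under eq_bigr => i _ do rewrite efT (row_sum_delta (phif F0 'e_i)) tb_suml.
under eq_bigr => i _ do under eq_bigr => j _ do
  rewrite tbZl mxE edot -tbZr.
rewrite exchange_big /=; apply: eq_bigr => j _.
rewrite -tb_sumr.
by rewrite [q (F0 _)](hom_row _ qhom).
Qed.


Lemma fX_eq fT gT :
  tensor_map (@tb _ _ M) (@tb _ _ M) (phif f) fT ->
  tensor_map (@tb _ _ M) (@tb _ _ M) (phif g) gT -> fT X = gT X.
Proof.
move=> hfT hgT; rewrite (fmap_X hfT) (fmap_X hgT); apply: eq_bigr => j _.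
case: hq => _ [e _]; by have /= -> := e 'e_j.
Qed.

Lemma exists_decomp : exists s : seq (Esub f g * M),
  forall i, xi i = \sum_(p <- s) (eval p.1) 0 i *: p.2.
Proof.
have [eT heT] := tmap_ex (N1 := Esub f g) (N2 := 'rV[A]_n) M (@eval_hom _ _ _ f g).
have [fT hfT] := tmap_ex (N1 := 'rV[A]_n) (N2 := 'rV[A]_k) M (phif_hom f).
have [gT hgT] := tmap_ex (N1 := 'rV[A]_n) (N2 := 'rV[A]_k) M (phif_hom g).
case: hfl => [[_ _ heq] _].
have Heq := heq _ _ _ _ _ _ (phif f) (phif g) (@eval _ _ _ f g) (@tb _ _ M) (@tb _ _ M) (@tb _ _ M) fT gT eT
  (E_equalizer f g) (tensor_ok _ M) (tensor_ok _ M) (tensor_ok _ M) hfT hgT heT.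
case: Heq => _ [_ Hu].
pose z := fun w : 'rV[A]_1 => w 0 0 *: X.
have hz : is_hom z.
  split; rewrite /z.
  - by rewrite mxE scale0r.
  - by move=> x y; rewrite mxE scalerDl.
  - by move=> a x; rewrite mxE scalerA.
have ez : (fT \o z) =1 (gT \o z).
  move=> w /=; rewrite /z; have [hfT' _] := hfT; have [hgT' _] := hgT.
  by rewrite (homZ _ _ hfT') (homZ _ _ hgT') (fX_eq hfT hgT).
have [u [hu eu _]] := Hu _ z hz ez.
have [s es] := Tens_span (u 'e_0).
exists s => i.
have hb : is_bilinear (fun (v : 'rV[A]_n) (m : M) => v 0 i *: m).
  split=> [m|v]; split.
  - by rewrite mxE scale0r.
  - by move=> x y; rewrite mxE scalerDl.
  - by move=> a x; rewrite mxE scalerA.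
  - by rewrite scaler0.
  - by move=> x y; rewrite scalerDr.
  - by move=> a x; rewrite !scalerA mulrC.
have [pi [hpi epi _]] := (tensor_ok 'rV[A]_n M).2 _ _ hb.
have e1 : pi X = xi i.
  rewrite /X hom_sum //; under eq_bigr => i' _ do rewrite epi.
  exact: sum_delta.
have e2 : eT (u 'e_0) = X.
  by have := eu 'e_0; rewrite /= /z mxE /= scale1r.
rewrite -e1 -e2 es; case: heT => heT' eeT.
rewrite hom_sum // hom_sum //; apply: eq_bigr => p _.
by rewrite eeT epi.
Qed.


Lemma retract : exists m (s' : M -> 'rV[A]_m) (q' : 'rV[A]_m -> M),
  [/\ is_hom s', is_hom q' & forall x, q' (s' x) = x].
Proof.
have [s hs] := exists_decomp.
pose m := size s. pose p0 : Esub f g * M := (0, 0).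
pose c (l : 'I_m) := nth p0 s l.
pose h := fun v : 'rV[A]_n => \row_(l < m) dot (eval (c l).1) v.
have hh : is_hom h by exact: rowhom.
pose q' := fun w : 'rV[A]_m => \sum_(l < m) w 0 l *: (c l).2.
have hq' : is_hom q' by exact: combhom.
have hqh : forall v, q' (h v) = q v.
  apply: hom_ext; [exact: hom_comp | exact: qhom | move=> i].
  rewrite /q' -/(xi i) hs (big_nth p0) big_mkord; apply: eq_bigr => l _.
  by rewrite mxE dote.
have hhf : (h \o f) =1 (h \o g).
  move=> w; apply/rowP => l; rewrite /= !mxE (hom_row w hf) (hom_row w hg) !dot_sumr.
  apply: eq_bigr => j _; rewrite !dotZr; congr (_ * _).
  by case: (c l).1 => u /= /forallP hu; apply/eqP/hu.
have [_ [qfg Hu]] := hq.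
have [s' [hs' es' _]] := Hu _ h hh hhf.
exists m, s', q'; split => // x.
have [u0 [_ _ uniq]] := Hu _ q qhom qfg.
rewrite (uniq (fun x => q' (s' x))) //; first last.
- by move=> v /=; rewrite -[s' (q v)]/((s' \o q) v) es'.
- exact: hom_comp.
rewrite -(uniq id) //; by split.
Qed.

End MainSec.

Theorem mainTheorem6 (A : comPzSemiRingType) (M : lSemiModType A) :
  finitely_presented M -> flat M -> projective M.
Proof.
move=> [k [n [f [g [q [hf hg hq]]]]]] hfl N p hp surj.
have [m [s' [q' [hs' hq' e]]]] := retract hf hg hq hfl.
pose pre y := proj1_sig (constructive_indefinite_description _ (surj y)).
have epre y : p (pre y) = y.
  by rewrite /pre; case: constructive_indefinite_description.
pose sigma y := \sum_(l < m) (s' y) 0 l *: pre (q' 'e_l).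
exists sigma; split.
  exact: (hom_comp hs' (combhom _)).
move=> y /=; rewrite /sigma hom_sum //.
under eq_bigr => l _ do rewrite (homZ _ _ hp) epre.
by rewrite -hom_row.
Qed.
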